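(* Let $L\ge 2$ and let $S=(d,N_1,\dots,N_{L-1},1)$ be a neural network architecture. Let $\varrho:\mathbb{R}\to\mathbb{R}$ satisfy: (i) $\varrho$ is continuous and increasing; (ii) there is $x_0\in\mathbb{R}$ such that $\varrho$ is differentiable at $x_0$ with $\varrho'(x_0)\ne 0$; (iii) there is $r>0$ such that $\varrho|_{(-\infty,-r)\cup(r,\infty)}$ is differentiable; (iv) at least one of: (a) there are $\lambda,\lambda'\ge 0$ with $\lambda\ne\lambda'$ such that $\varrho'(x)\to\lambda$ as $x\to\infty$ and $\varrho'(x)\to\lambda'$ as $x\to-\infty$, and $N_{L-1}\ge 2$; or (b) $\varrho$ is bounded. Let $B>0$ and let $\mu$ be a finite Borel measure on $[-B,B]^d$ whose support $\operatorname{supp}\mu$ is uncountable. Then $\mathcal{RNN}_\varrho^{[-B,B]^d}(S)$ is not closed in $L^p(\mu)$ for any $p\in(0,\infty)$. More precisely, there is $f\in L^\infty(\mu)$ such that, for every $p\in(0,\infty)$, $f$ belongs to the closure of $\mathcal{RNN}_\varrho^{[-B,B]^d}(S)$ in $L^p(\mu)$ but $f\notin\mathcal{RNN}_\varrho^{[-B,B]^d}(S)$.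
   Context: A neural network with architecture $S=(N_0,\dots,N_L)$ ($N_0=d$) is a family $\Phi=((A_\ell,b_\ell))_{\ell=1}^L$, $A_\ell\in\mathbb{R}^{N_\ell\times N_{\ell-1}}$, $b_\ell\in\mathbb{R}^{N_\ell}$; $\mathcal{NN}(S)$ is the set of these. For $\varrho:\mathbb{R}\to\mathbb{R}$ and $\Omega\subset\mathbb{R}^d$, $\mathrm{R}_\varrho^\Omega(\Phi):\Omega\to\mathbb{R}^{N_L}$, $x\mapsto x_L$, where $x_0=x$, $x_\ell=\varrho(A_\ell x_{\ell-1}+b_\ell)$ for $1\le\ell\le L-1$ (componentwise), $x_L=A_Lx_{L-1}+b_L$; $\mathcal{RNN}_\varrho^\Omega(S)=\{\mathrm{R}_\varrho^\Omega(\Phi):\Phi\in\mathcal{NN}(S)\}$, regarded as a subset of $L^p(\mu)$ (functions identified $\mu$-a.e.). *)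

(* Defs.v *)
From HB Require Import structures.
From mathcomp Require Import all_boot all_order all_algebra.
From mathcomp Require Import all_classical all_reals all_analysis.
Set Implicit Arguments. Unset Strict Implicit. Unset Printing Implicit Defensive.
Import Order.TTheory GRing.Theory Num.Theory.
Import numFieldNormedType.Exports.
Local Open Scope classical_set_scope.
Local Open Scope ring_scope.

Definition Rd (R : realType) (d : nat) :=
  g_sigma_algebraType (@open 'cV[R]_d).

(* A network with architecture (N 0, N 1, ..., N (L-1), 1):
   hidden layers l = 1 .. L-1 have weights A (l-1) : 'M_(N l, N (l-1)) and
   biases b (l-1) : 'cV_(N l); the output layer L has weights
   Aout : 'M_(1, N (L-1)) and bias bout : R.
   (Components A l, b l with l >= L-1 are never used.) *)
Record NN (R : realType) (N : nat -> nat) (L : nat) := mkNN {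
  nn_A : forall l : nat, 'M[R]_(N l.+1, N l);
  nn_b : forall l : nat, 'cV[R]_(N l.+1);
  nn_Aout : 'M[R]_(1, N L.-1);
  nn_bout : R }.

Fixpoint nn_hidden (R : realType) (N : nat -> nat) (L : nat)
  (rho : R -> R) (Phi : NN R N L) (x : 'cV[R]_(N 0%N)) (l : nat) : 'cV[R]_(N l) :=
  match l return 'cV[R]_(N l) with
  | 0 => x
  | l'.+1 => map_mx rho (nn_A Phi l' *m nn_hidden rho Phi x l' + nn_b Phi l')
  end.

Definition realization (R : realType) (N : nat -> nat) (L : nat)
  (rho : R -> R) (Phi : NN R N L) (x : 'cV[R]_(N 0%N)) : R :=
  (nn_Aout Phi *m nn_hidden rho Phi x L.-1) ord0 ord0 + nn_bout Phi.

Definition cube (R : realType) (d : nat) (B : R) : set 'cV[R]_d :=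
  [set x | forall i : 'I_d, `|x i ord0| <= B].

Definition msupport (R : realType) (d : nat)
  (mu : {measure set (Rd R d) -> \bar R}) : set 'cV[R]_d :=
  [set x | forall U : set 'cV[R]_d, open U -> U x -> (0 < mu U)%E].

Definition in_Linfty (R : realType) (d : nat)
  (mu : {measure set (Rd R d) -> \bar R}) (f : Rd R d -> R) : Prop :=
  measurable_fun setT f /\ exists M : R, {ae mu, forall x, `|f x| <= M}.

(* f lies in the L^p(mu)-closure of the set of realizations:
   some sequence of realizations converges to f in L^p(mu), i.e.
   \int |g_n - f|^p dmu -> 0 (for 0 < p this is the (quasi-)metric of L^p). *)
Definition in_Lp_closure_RNN (R : realType) (N : nat -> nat) (L : nat)
  (rho : R -> R) (mu : {measure set (Rd R (N 0%N)) -> \bar R})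
  (p : R) (f : Rd R (N 0%N) -> R) : Prop :=
  exists Phi : nat -> NN R N L,
    (fun n => (\int[mu]_x (`|realization rho (Phi n) x - f x| `^ p)%:E)%E)
      @ \oo --> 0%E.

(* f (as an element of L^p(mu)) is a realization: equal mu-a.e. to one *)
Definition in_RNN (R : realType) (N : nat -> nat) (L : nat)
  (rho : R -> R) (mu : {measure set (Rd R (N 0%N)) -> \bar R})
  (f : Rd R (N 0%N) -> R) : Prop :=
  exists Phi : NN R N L, {ae mu, forall x, f x = realization rho Phi x}.

(* Main.v *)
Require Import Defs.
From HB Require Import structures.
From mathcomp Require Import all_boot all_order all_algebra.
From mathcomp Require Import all_classical all_reals all_analysis.
From mathcomp Require Import ring lra.
Import Order.TTheory GRing.Theory Num.Theory.
Import numFieldNormedType.Exports.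
Local Open Scope classical_set_scope.
Local Open Scope ring_scope.
Set Implicit Arguments. Unset Strict Implicit. Unset Printing Implicit Defensive.
Section S.
Variable R : realType.
Lemma rho_flat_deriv (rho : R -> R) x0 y :
  derivable rho x0 1 -> y < x0 -> (forall z, y <= z <= x0 -> rho z = rho x0) ->
  derive1 rho x0 = 0.
Proof.
move=> dr yx hz; rewrite derive1E.
have := dr; rewrite /derivable => /cvg_ex[l hl].
have -> : 'D_1 rho x0 = l by apply/cvg_lim.
apply/eqP; rewrite -normr_le0; apply/ler_addgt0Pr => e e0; rewrite add0r.
move/cvgrPdist_lt: hl => /(_ e e0) /nbhs_ballP[a a0 Ha].
set m := Num.min (x0 - y) a.
pose h := - (m / 2).
have hm : 0 < m by rewrite lt_min subr_gt0 yx a0.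
have hn : h != 0 by rewrite /h oppr_eq0 mulf_neq0 // ?gt_eqF // invr_eq0.
have := Ha h; rewrite /ball /= sub0r normrN /h normrN.
move=> /(_ _ hn) H; apply/ltW; move: H; rewrite /= hz ?subrr ?scaler0 ?subr0 //.
  apply; rewrite gtr0_norm ?divr_gt0 //.
  have : m <= a by rewrite ge_min lexx orbT. lra.
  rewrite -[(- (m/2))%:A]/(-(m/2) * 1) mulr1; apply/andP; split.
  have : m <= x0 - y by rewrite ge_min lexx. lra. lra.
Qed.

Lemma rho_flat_derivR (rho : R -> R) x0 y :
  derivable rho x0 1 -> x0 < y -> (forall z, x0 <= z <= y -> rho z = rho x0) ->
  derive1 rho x0 = 0.
Proof.
move=> dr yx hz; rewrite derive1E.
have := dr; rewrite /derivable => /cvg_ex[l hl].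
have -> : 'D_1 rho x0 = l by apply/cvg_lim.
apply/eqP; rewrite -normr_le0; apply/ler_addgt0Pr => e e0; rewrite add0r.
move/cvgrPdist_lt: hl => /(_ e e0) /nbhs_ballP[a a0 Ha].
set m := Num.min (y - x0) a.
pose h := (m / 2).
have hm : 0 < m by rewrite lt_min subr_gt0 yx a0.
have hn : h != 0 by rewrite /h mulf_neq0 // ?gt_eqF // invr_eq0.
have := Ha h; rewrite /ball /= sub0r normrN /h.
move=> /(_ _ hn) H; apply/ltW; move: H; rewrite /= hz ?subrr ?scaler0 ?subr0 //.
  apply; rewrite gtr0_norm ?divr_gt0 //.
  have : m <= a by rewrite ge_min lexx orbT. lra.
  rewrite -[((m/2))%:A]/((m/2) * 1) mulr1; apply/andP; split.
  lra. have : m <= y - x0 by rewrite ge_min lexx. lra.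
Qed.

Lemma rho_strict (rho : R -> R) x0 : {homo rho : x y / x <= y} ->
  derivable rho x0 1 -> derive1 rho x0 != 0 ->
  (forall y, y < x0 -> rho y < rho x0) /\ (forall y, x0 < y -> rho x0 < rho y).
Proof.
move=> mon dr dn; split=> y yx; rewrite ltNge; apply/negP => hy; move/eqP: dn; apply.
  apply: (@rho_flat_deriv rho x0 y dr yx) => z /andP[yz zx]; apply/eqP; rewrite eq_le mon //=.
  exact: le_trans hy (mon _ _ yz).
apply: (@rho_flat_derivR rho x0 y dr yx) => z /andP[yz zx]; apply/eqP; rewrite eq_le (mon _ _ yz) /=.
rewrite andbT; exact: le_trans (mon _ _ zx) hy.
Qed.
End S.
Section S.
Variable R : realType.
Lemma mxballE d (p q : 'cV[R]_d) e : ball p e q <-> 0 < e /\ forall i j, `|p i j - q i j| < e.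
Proof. by []. Qed.

Definition goodc d (S : set 'cV[R]_d) (p : 'cV[R]_d)
  (c : nat * {ffun 'I_d -> int} * {ffun 'I_d -> bool}) :=
  let: (m, k, s) := c in
  S p /\ (0 < m)%N /\
  (forall j, `|p j ord0 - (k j)%:~R / m%:R| < m%:R^-1) /\
  forall q, S q -> (forall j, `|q j ord0 - (k j)%:~R / m%:R| < m%:R^-1) ->
    forall i, if s i then q i ord0 <= p i ord0 else p i ord0 <= q i ord0.

Lemma goodc_inj d (S : set 'cV[R]_d) p p' c : goodc S p c -> goodc S p' c -> p = p'.
Proof.
case: c => [[m k] s] [Sp [m0 [pc Hp]]] [Sp' [_ [pc' Hp']]].
apply/matrixP => i j; rewrite (ord1 j).
have := Hp _ Sp' pc' i; have := Hp' _ Sp pc i.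
by case: (s i) => h1 h2; apply/eqP; rewrite eq_le h1 h2.
Qed.

Lemma two_sided_point d (S : set 'cV[R]_d) : ~ countable S ->
  exists p i, S p /\ forall e, 0 < e ->
    (exists q, S q /\ ball p e q /\ p i ord0 < q i ord0) /\
    (exists q, S q /\ ball p e q /\ q i ord0 < p i ord0).
Proof.
move=> nc; apply/not_existsP => hall; apply: nc.
have hc : forall p, exists c, S p -> goodc S p c.
  move=> p; have [Sp|nSp] := pselect (S p); last first.
    by exists (0%N, [ffun=> 0%Z], [ffun=> true]).
  have hi : forall i : 'I_d, exists b : bool, \forall q \near p,
      S q -> if b then q i ord0 <= p i ord0 else p i ord0 <= q i ord0.
    move=> i; have := hall p; move/forallNP => /(_ i) /not_andP [//|].
    move/existsNP => [e /not_implyP [e0 /not_andP He]].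
    case: He => [/forallNP H|/forallNP H].
      exists true; apply/nbhs_ballP; exists e => //= q pq Sq.
      by rewrite leNgt; apply/negP => lt; apply: (H q).
    exists false; apply/nbhs_ballP; exists e => //= q pq Sq.
    by rewrite leNgt; apply/negP => lt; apply: (H q).
  have [sf Hs] := choice hi.
  have H2 := @filter_forall _ _ _ _ _ Hs. have [e /= e0 He] := (nbhs_ballP _ _).1 (H2 _).
  pose m := Num.bound (3 / e).
  have hm : 3 / e < m%:R by apply: archi_boundP; rewrite divr_ge0 // ltW.
  have m0 : (0 < m)%N.
    by rewrite -(ltr0n R); apply: lt_trans hm; rewrite divr_gt0.
  have m0' : 0 < (m%:R : R) by rewrite ltr0n.
  exists (m, [ffun j => Num.floor (p j ord0 * m%:R)], finfun sf) => _.
  have pc : forall j, `|p j ord0 - (Num.floor (p j ord0 * m%:R))%:~R / m%:R| < m%:R^-1.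
    move=> j; have h1 := floor_le (p j ord0 * m%:R).
    have h2 := floorD1_gt (p j ord0 * m%:R).
    rewrite intrD in h2.
    rewrite ger0_norm; last first.
      by rewrite subr_ge0 ler_pdivrMr.
    set P := p j ord0 in h1 h2 *; set F := (Num.floor _)%:~R in h1 h2 *.
    set M := (m%:R : R) in m0' h1 h2 *.
    have e1 : P - F / M = (P * M - F) / M by rewrite mulrBl mulfK // gt_eqF.
    rewrite e1 ltr_pdivrMr // mulVf ?gt_eqF //. rewrite mulr1z in h2. lra.
  split=> //; split=> //; split.
    by move=> j; rewrite ffunE.
  move=> q Sq qc i; rewrite ffunE.
  apply: (He q _ i Sq); split => // a b; rewrite (ord1 b).
  have := pc a; have := qc a; rewrite ffunE.
  set z := (_ / _).
  have : m%:R^-1 * 3 < e.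
    by rewrite mulrC -ltr_pdivlMr ?invr_gt0 // invrK mulrC -ltr_pdivrMr.
  have : 0 < m%:R^-1 :> R by rewrite invr_gt0.
  move=> h0 h3 hq hp.
  have := ler_distD z (p a ord0) (q a ord0). rewrite (distrC z) => h; change (`|p a ord0 - q a ord0| < e); lra.
have [cf Hcf] := choice hc.
apply/countable_injP; exists (fun p => pickle (cf p)).
move=> p p'; rewrite !inE => Sp Sp' /(pcan_inj pickleK) h.
apply: (goodc_inj (Hcf p Sp)); rewrite h; exact: Hcf.
Qed.
End S.
Section Net.
Variable R : realType.
Variables (N : nat -> nat) (L' : nat) (rho : R -> R) (i : 'I_(N 0%N)) (c x0 : R)
  (co : nat -> R).

Definition zz (l : nat) : R := if l == 0%N then c else rho x0.
Definition ww (n : nat) (l : nat) : R := if l == L' then n%:R else 1.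
Definition sel (l : nat) : nat := if l == 0%N then val i else 0%N.
Definition beta (l j : nat) : R := if l == L' then (j == 1%N)%:R else x0.

Definition netA (n : nat) (l : nat) : 'M[R]_(N l.+1, N l) :=
  \matrix_(j, k) (((k : nat) == sel l)%:R * ww n l).
Definition netb (n : nat) (l : nat) : 'cV[R]_(N l.+1) :=
  \col_j (- (ww n l * zz l) + beta l j).
Definition net (n : nat) : NN R N L'.+2 :=
  @mkNN R N L'.+2 (netA n) (netb n) (\row_k co k) 0.

Fixpoint ss (l : nat) (x : 'cV[R]_(N 0%N)) : R :=
  match l with 0 => x i ord0 | l'.+1 => rho (ss l' x - zz l' + x0) end.

Lemma ss_sign (x : 'cV[R]_(N 0%N)) :
  (forall y, y < x0 -> rho y < rho x0) /\ (forall y, x0 < y -> rho x0 < rho y) ->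
  forall l, (c < x i ord0 -> zz l < ss l x) /\ (x i ord0 < c -> ss l x < zz l).
Proof.
move=> [sl sr]; elim => [|l [IH1 IH2]] //=.
split => h.
  change (rho x0 < rho (ss l x - zz l + x0)).
  by apply: sr; have := IH1 h; lra.
change (rho (ss l x - zz l + x0) < rho x0).
by apply: sl; have := IH2 h; lra.
Qed.

Lemma sum_sel m (F : 'I_m -> R) (k0 : 'I_m) a : val k0 = a ->
  \sum_(k < m) (((k : nat) == a)%:R * F k) = F k0.
Proof.
move=> <-; rewrite (bigD1 k0) //= eqxx mul1r big1 ?addr0 // => k kk0.
by rewrite (inj_eq val_inj) (negbTE kk0) mul0r.
Qed.

Hypothesis Npos : forall l, (l <= L'.+1)%N -> (0 < N l)%N.

Lemma sel_ex l : (l <= L'.+1)%N -> exists k : 'I_(N l), val k = sel l.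
Proof.
rewrite /sel; case: l => [|l] hl /=; first by exists i.
by exists (Ordinal (Npos hl)).
Qed.

Lemma hidden_sel n x l : (l <= L')%N -> forall k : 'I_(N l), val k = sel l ->
  nn_hidden rho (net n) x l k ord0 = ss l x.
Proof.
elim: l => [|l IH] hl k hk /=.
  by congr (x _ _); apply: val_inj; rewrite hk.
rewrite mxE !mxE; congr (rho _).
have [k0 hk0] := sel_ex (leq_trans (ltnW hl) (leqnSn _)).
under eq_bigr => j _ do rewrite !mxE -mulrA.
rewrite (sum_sel _ hk0) IH ?(ltnW hl) // /ww.
have -> : (l == L') = false by apply/negbTE; rewrite neq_ltn hl.
by rewrite /beta (_ : (l == L') = false) ?mul1r ?addrA // ; apply/negbTE; rewrite neq_ltn hl.
Qed.

Lemma hidden_last n x (k : 'I_(N L'.+1)) :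
  nn_hidden rho (net n) x L'.+1 k ord0 = rho (n%:R * (ss L' x - zz L') + (val k == 1%N)%:R).
Proof.
rewrite /= mxE !mxE; congr (rho _).
have [k0 hk0] := sel_ex (leqnSn L').
under eq_bigr => j _ do rewrite !mxE -mulrA.
rewrite (sum_sel _ hk0) hidden_sel // /ww /beta eqxx mulrBr.
by rewrite mulrC addrA.
Qed.

Lemma net_real n x : realization rho (net n) x =
  \sum_(k < N L'.+1) co k * rho (n%:R * (ss L' x - zz L') + (val k == 1%N)%:R).
Proof.
rewrite /realization /= addr0 mxE; apply: eq_bigr => k _.
by rewrite mxE hidden_last.
Qed.

End Net.
Section Cont.
Variable R : realType.

Lemma cont_sum (T : topologicalType) m (F : 'I_m -> T -> R) :
  (forall k, continuous (F k)) -> continuous (fun x => \sum_(k < m) F k x).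
Proof.
elim: m F => [|m IH] F hF.
  under eq_fun do rewrite big_ord0; exact: cst_continuous.
under eq_fun do rewrite big_ord_recr /=.
move=> x; apply: continuousD; last exact: hF.
exact: (IH (fun k => F (widen_ord (leqnSn m) k))).
Qed.

Lemma hidden_cont (N : nat -> nat) L (rho : R -> R) (Phi : NN R N L) :
  continuous rho -> forall l (j : 'I_(N l)),
  continuous (fun x => nn_hidden rho Phi x l j ord0).
Proof.
move=> rc; elim => [|l IH] j /=.
  exact: coord_continuous.
under eq_fun do rewrite mxE !mxE.
move=> x; apply: continuous_comp; last exact: rc.
apply: continuousD; last exact: cst_continuous.
apply: cont_sum => k y; apply: continuousM; first exact: cst_continuous.
exact: IH.
Qed.

Lemma real_cont (N : nat -> nat) L (rho : R -> R) (Phi : NN R N L) :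
  continuous rho -> continuous (realization rho Phi).
Proof.
move=> rc; rewrite /realization.
under eq_fun do rewrite mxE.
move=> x; apply: continuousD; last exact: cst_continuous.
apply: cont_sum => k y; apply: continuousM; first exact: cst_continuous.
exact: hidden_cont.
Qed.

Lemma open_meas d (U : set 'cV[R]_d) : open U -> measurable (U : set (Rd R d)).
Proof. by move=> oU; apply: sub_sigma_algebra. Qed.

Lemma cont_meas d (g : 'cV[R]_d -> R) : continuous g ->
  measurable_fun (setT : set (Rd R d)) g.
Proof.
move=> /continuousP cg; apply: (@measurability _ _ _ _ _ _ _ (measurable_realfun.RGenOpens.measurableE R)).
move=> _ [_ [a [b ->] <-]]; rewrite setTI; apply: open_meas; apply: cg.
exact: interval_open.
Qed.
End Cont.
Section Asm.
Variable R : realType.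
Variable d : nat.
Variable mu : {measure set (Rd R d) -> \bar R}.

Lemma lim_bound (u : nat -> R) l M : u @ \oo --> l -> (forall n, `|u n| <= M) -> `|l| <= M.
Proof.
move=> ul hM; have cu : cvgn u by apply/cvg_ex; exists l.
have <- := cvg_lim (@Rhausdorff R) ul.
rewrite ler_norml; apply/andP; split.
  by apply: limr_ge => //; apply: nearW => n; have := hM n; rewrite ler_norml => /andP[].
by apply: limr_le => //; apply: nearW => n; have := hM n; rewrite ler_norml => /andP[].
Qed.

Lemma f_meas (g : nat -> 'cV[R]_d -> R) (f : 'cV[R]_d -> R) :
  (forall n, continuous (g n)) -> (forall x, g ^~ x @ \oo --> f x) ->
  measurable_fun (setT : set (Rd R d)) f.
Proof.
move=> gc gf; apply: (@measurable_realfun.measurable_fun_cvg _ (Rd R d) R setT g f).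
  by move=> n; apply: cont_meas.
by move=> x _; apply: gf.
Qed.

Lemma Lp_conv (g : nat -> 'cV[R]_d -> R) (f : 'cV[R]_d -> R) M p :
  (forall n, continuous (g n)) -> (forall x, g ^~ x @ \oo --> f x) ->
  (forall n x, `|g n x| <= M) -> (mu setT < +oo)%E -> 0 < p ->
  (fun n => \int[mu]_x (`|g n x - f x| `^ p)%:E)%E @ \oo --> 0%E.
Proof.
move=> gc gf gM mufin p0.
have fM : forall x, `|f x| <= M by move=> x; apply: (lim_bound (gf x)).
have mf := f_meas gc gf.
have M0 : 0 <= M by apply: le_trans (gM 0%N (0 : 'cV[R]_d)).
pose C := ((M + M) `^ p)%:E.
have := @dominated_cvg _ _ _ mu setT measurableT
   (fun n x => (`|g n x - f x| `^ p)%:E) (cst 0%E) (cst C).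
rewrite integral0; apply.
- move=> n; apply/measurable_realfun.measurable_EFinP.
  apply: (measurableT_comp (measurable_realfun.measurable_powR p)).
  apply: measurableT_comp => //.
  by apply: measurable_realfun.measurable_funB => //; apply: cont_meas.
- move=> x _; apply: cvg_EFin; first by apply: nearW.
  apply/cvgrPdist_lt => e e0.
  have hd := gf x; move/cvgrPdist_lt: hd => /(_ (e `^ p^-1)) hd.
  have : 0 < e `^ p^-1 by apply: powR_gt0.
  move/hd; apply: filterS => n hn /=.
  rewrite sub0r normrN ger0_norm ?powR_ge0 //.
  have -> : e = (e `^ p^-1) `^ p by rewrite -powRrM mulVf ?gt_eqF // powRr1 // ltW.
  apply: (gt0_ltr_powR p0); rewrite ?nnegrE ?powR_ge0 //.
  by rewrite distrC.
- by [].
- apply/integrableP; split; first exact: measurable_cst.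
  rewrite integral_cst //= ger0_norm ?powR_ge0 //.
  by rewrite lte_mul_pinfty // lee_fin powR_ge0.
- move=> n x _; rewrite /= ger0_norm ?powR_ge0 // lee_fin.
  apply: ge0_ler_powR; rewrite ?nnegrE ?normr_ge0 ?addr_ge0 //; first exact: ltW.
  by rewrite (le_trans (ler_normB _ _)) // lerD.
Qed.
End Asm.
Section NotAE.
Variable R : realType.
Variable d : nat.
Variable mu : {measure set (Rd R d) -> \bar R}.

Lemma open_half (i : 'I_d) c (sg : bool) :
  open [set y : 'cV[R]_d | if sg then c < y i ord0 else y i ord0 < c].
Proof.
rewrite openE => y hy; apply/nbhs_ballP.
exists (if sg then y i ord0 - c else c - y i ord0).
  by case: sg hy => /=; rewrite subr_gt0.
move=> z [_ /(_ i ord0) /=]; case: sg hy => /= hy hz.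
  have hz' : `|y i ord0 - z i ord0| < y i ord0 - c := hz.
  have := ler_norm (y i ord0 - z i ord0); lra.
have hz' : `|z i ord0 - y i ord0| < c - y i ord0 by rewrite distrC; exact: hz.
have := ler_norm (z i ord0 - y i ord0); lra.
Qed.

Lemma support_ae (f h : 'cV[R]_d -> R) (U : set 'cV[R]_d) q :
  open U -> U q -> msupport mu q -> {ae mu, forall x, f x = h x} ->
  exists y, U y /\ f y = h y.
Proof.
move=> oU Uq Sq [N0 [mN0 N00 sN0]].
apply/not_existsP => hn.
have : (0 < mu U)%E by apply: Sq.
have -> : U = U `&` N0.
  apply/seteqP; split=> [y Uy|y []//]; split=> //; apply: sN0 => /= e.
  by apply: (hn y); split.
move=> hpos.
have hle : (mu (U `&` N0) <= mu N0)%E.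
  apply: le_measure; rewrite ?inE //.
  by apply: measurableI => //; apply: open_meas.
rewrite N00 in hle; have := lt_le_trans hpos hle; by rewrite ltxx.
Qed.

Lemma not_ae_eq (f h : 'cV[R]_d -> R) (p : 'cV[R]_d) (i : 'I_d) a b :
  continuous h -> a < b ->
  (forall x : 'cV[R]_d, p i ord0 < x i ord0 -> b <= f x) ->
  (forall x : 'cV[R]_d, x i ord0 < p i ord0 -> f x <= a) ->
  (forall e, 0 < e ->
    (exists q, msupport mu q /\ ball p e q /\ p i ord0 < q i ord0) /\
    (exists q, msupport mu q /\ ball p e q /\ q i ord0 < p i ord0)) ->
  ~ {ae mu, forall x, f x = h x}.
Proof.
move=> hc ab fb fa two hae.
have := hc p; move/cvgrPdist_lt => /(_ ((b - a) / 2)).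
have e2 : 0 < (b - a) / 2 by rewrite divr_gt0 // subr_gt0.
move=> /(_ e2) /nbhs_ballP [e /= e0 He].
have [[q1 [S1 [b1 l1]]] [q2 [S2 [b2 l2]]]] := two e e0.
have [y1 [[by1 hy1] ey1]] := @support_ae f h
  (ball p e `&` [set y | if true then p i ord0 < y i ord0 else y i ord0 < p i ord0])
  q1 (openI (ball_open _ _) (@open_half i (p i ord0) true)) (conj b1 l1) S1 hae.
have [y2 [[by2 hy2] ey2]] := @support_ae f h
  (ball p e `&` [set y | if false then p i ord0 < y i ord0 else y i ord0 < p i ord0])
  q2 (openI (ball_open _ _) (@open_half i (p i ord0) false)) (conj b2 l2) S2 hae.
have := He _ by1; have := He _ by2; move=> /= h2 h1.
have := fb _ hy1; have := fa _ hy2; rewrite ey1 ey2 => f2 f1.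
have := ler_norm (h y1 - h p); rewrite distrC => n1.
have := ler_norm (h p - h y2) => n2.
lra.
Qed.
End NotAE.
Section Rho.
Variable R : realType.
Variable rho : R -> R.
Hypothesis mon : {homo rho : x y / x <= y}.

Definition Hgood (H : R -> R) :=
  [/\ (forall t, cvgn (fun n : nat => H (n%:R * t))),
      (exists a b, a < b /\ (forall t, 0 < t -> b <= limn (fun n : nat => H (n%:R * t)))
          /\ (forall t, t < 0 -> limn (fun n : nat => H (n%:R * t)) <= a))
    & (exists M, forall v, `|H v| <= M)].

Lemma eventually_ge (t r : R) : 0 < t -> \forall n \near \oo, r <= n%:R * t.
Proof.
move=> t0; near=> n; rewrite -ler_pdivrMr //; near: n; exact: nbhs_infty_ger.
Unshelve. all: by end_near. Qed.

Lemma eventually_le (t r : R) : t < 0 -> \forall n \near \oo, n%:R * t <= r.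
Proof.
move=> t0; near=> n; rewrite -lerN2 -mulrN -ler_pdivrMr ?oppr_gt0 //.
near: n; exact: nbhs_infty_ger.
Unshelve. all: by end_near. Qed.

Lemma caseb x0 : (forall y, y < x0 -> rho y < rho x0) /\ (forall y, x0 < y -> rho x0 < rho y) ->
  (exists M, forall x, `|rho x| <= M) -> Hgood rho.
Proof.
move=> [sl sr] [M hM].
have cv : forall t, cvgn (fun n : nat => rho (n%:R * t)).
  move=> t; have [t0|t0] := leP 0 t.
    apply: nondecreasing_is_cvgn.
      by move=> n m nm; apply: mon; apply: ler_wpM2r => //; rewrite ler_nat.
    by exists M => _ [n _ <-]; have := hM (n%:R * t); rewrite ler_norml => /andP[].
  apply: nonincreasing_is_cvgn.
    by move=> n m nm; apply: mon; apply: ler_wnM2r; [exact: ltW|rewrite ler_nat].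
  by exists (- M) => _ [n _ <-]; have := hM (n%:R * t); rewrite ler_norml => /andP[].
split => //; last by exists M.
exists (rho (x0 - 1)), (rho (x0 + 1)); split.
  apply: (@lt_trans _ _ (rho x0)); [apply: sl|apply: sr]; lra.
split => t t0.
  apply: limr_ge; first exact: cv.
  by apply: filterS (eventually_ge (x0 + 1) t0) => n; apply: mon.
apply: limr_le; first exact: cv.
by apply: filterS (eventually_le (x0 - 1) t0) => n; apply: mon.
Qed.
End Rho.
Section RhoA.
Variable R : realType.
Variable rho : R -> R.
Hypothesis mon : {homo rho : x y / x <= y}.
Hypothesis rc : continuous rho.
Variable r : R.
Hypothesis r0 : 0 < r.
Hypothesis hr : forall x, r < `|x| -> derivable rho x 1.

Lemma mvt_step v : r < v \/ v + 1 < - r ->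
  exists xi, v < xi < v + 1 /\ rho (v + 1) - rho v = derive1 rho xi.
Proof.
move=> hv.
have := @MVT R rho (derive1 rho) v (v + 1) (_ : v < v + 1).
case; first by lra.
- move=> x; rewrite in_itv /= => /andP[vx xv].
  rewrite derive1E; apply: derivableP; apply: hr.
  case: hv => hv.
    by rewrite (lt_le_trans _ (ler_norm x)) //; lra.
  have := ler_norm (- x); rewrite normrN; lra.
- exact: continuous_subspaceT.
move=> xi; rewrite in_itv /= => hxi ->; exists xi; split => //.
by rewrite addrAC subrr add0r mulr1.
Qed.

Definition D v := rho (v + 1) - rho v.

Lemma D_ge0 v : 0 <= D v.
Proof. by rewrite /D subr_ge0 mon // lerDl. Qed.

Lemma D_pinfty lam : derive1 rho x @[x --> +oo] --> lam ->
  forall e, 0 < e -> exists K, forall v, K < v -> `|lam - D v| < e.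
Proof.
move=> /cvgrPdist_lt hl e e0; have [M [Mr HM]] := hl e e0.
exists (Num.max M r) => v; rewrite gt_max /D => /andP[Mv rv].
have [xi [/andP[vx xv] ->]] := @mvt_step v (or_introl rv).
by apply: HM; apply: lt_trans vx.
Qed.

Lemma D_ninfty lam : derive1 rho x @[x --> -oo] --> lam ->
  forall e, 0 < e -> exists K, forall v, v < K -> `|lam - D v| < e.
Proof.
move=> /cvgrPdist_lt hl e e0; have [M [Mr HM]] := hl e e0.
exists (Num.min (M - 1) (- r - 1)) => v; rewrite lt_min /D => /andP[Mv rv].
have hv : v + 1 < - r by lra.
have [xi [/andP[vx xv] ->]] := @mvt_step v (or_intror hv).
by apply: HM; lra.
Qed.

Lemma casea (s lam lam' : R) : `|s| = 1 -> s * lam' < s * lam -> 0 <= lam -> 0 <= lam' ->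
  derive1 rho x @[x --> +oo] --> lam -> derive1 rho x @[x --> -oo] --> lam' ->
  Hgood (fun v => s * D v).
Proof.
move=> s1 ll l0 l0' hp hn.
have lp : forall t, 0 < t -> (fun n : nat => s * D (n%:R * t)) @ \oo --> s * lam.
  move=> t t0; apply/cvgrPdist_lt => e e0.
  have [K HK] := D_pinfty hp e0.
  apply: filterS (eventually_ge (K + 1) t0) => n hn'.
  by rewrite -mulrBr normrM s1 mul1r; apply: HK; lra.
have ln : forall t, t < 0 -> (fun n : nat => s * D (n%:R * t)) @ \oo --> s * lam'.
  move=> t t0; apply/cvgrPdist_lt => e e0.
  have [K HK] := D_ninfty hn e0.
  apply: filterS (eventually_le (K - 1) t0) => n hn'.
  by rewrite -mulrBr normrM s1 mul1r; apply: HK; lra.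
split.
- move=> t; have [t0|t0|->] := ltgtP t 0.
  + by apply/cvg_ex; exists (s * lam'); apply: ln.
  + by apply/cvg_ex; exists (s * lam); apply: lp.
  + by under eq_fun do rewrite mulr0; exact: is_cvg_cst.
- exists (s * lam'), (s * lam); split => //; split => t t0.
    by rewrite (cvg_lim (@Rhausdorff R) (lp t t0)).
  by rewrite (cvg_lim (@Rhausdorff R) (ln t t0)).
- have [K1 H1] := D_pinfty hp ltr01.
  have [K2 H2] := D_ninfty hn ltr01.
  exists (lam + 1 + (lam' + 1) + `|rho (K1 + 1) - rho K2|) => v.
  rewrite normrM s1 mul1r ger0_norm ?D_ge0 //.
  have n0 := normr_ge0 (rho (K1 + 1) - rho K2).
  have [vK1|vK1] := ltP K1 v.
    have := H1 _ vK1; have := ler_norm (D v - lam); rewrite distrC; lra.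
  have [vK2|vK2] := ltP v K2.
    have := H2 _ vK2; have := ler_norm (D v - lam'); rewrite distrC; lra.
  have h1 : rho (v + 1) <= rho (K1 + 1) by apply: mon; lra.
  have h2 : rho K2 <= rho v by apply: mon.
  have := ler_norm (rho (K1 + 1) - rho K2); rewrite /D; lra.
Qed.
End RhoA.
Unset Implicit Arguments.

Theorem theorem3p1 (R : realType) (L : nat) (N : nat -> nat) (rho : R -> R)
    (B : R) (mu : {measure set (Rd R (N 0%N)) -> \bar R}) :
  (2 <= L)%N ->
  (forall l : nat, (l <= L.-1)%N -> (0 < N l)%N) ->
  (* (i) *)
  continuous rho ->
  {homo rho : x y / x <= y} ->
  (* (ii) *)
  (exists x0 : R, derivable rho x0 1 /\ derive1 rho x0 != 0) ->
  (* (iii) *)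
  (exists r : R, 0 < r /\ forall x : R, r < `|x| -> derivable rho x 1) ->
  (* (iv) *)
  ((exists lam lam' : R, 0 <= lam /\ 0 <= lam' /\ lam != lam' /\
       (derive1 rho x @[x --> +oo] --> lam) /\
       (derive1 rho x @[x --> -oo] --> lam') /\ (2 <= N L.-1)%N)
   \/ (exists M : R, forall x : R, `|rho x| <= M)) ->
  0 < B ->
  (* mu is a finite Borel measure on [-B,B]^d *)
  (mu setT < +oo)%E ->
  mu (~` @cube R (N 0%N) B) = 0%E ->
  (* supp mu is uncountable *)
  ~ countable (msupport mu) ->
  exists f : Rd R (N 0%N) -> R,
    [/\ in_Linfty mu f,
        (forall p : R, 0 < p -> in_Lp_closure_RNN L rho mu p f)
      & ~ in_RNN L rho mu f].
Proof.
move=> hL hN rc mon [x0 [dx0 dn]] [r [r0 hr]] hiv B0 mufin _ nc.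
case: L hL hN hiv => [|[|L']] // _ hN hiv.
have [p [i [Sp two]]] := two_sided_point nc.
have strict := rho_strict mon dx0 dn.
have Npos : forall l, (l <= L'.+1)%N -> (0 < N l)%N by exact: hN.
have [H [co [Hg Hco]]] : exists H (co : nat -> R), Hgood H /\ forall v,
    \sum_(k < N L'.+1) co k * rho (v + (val k == 1%N)%:R) = H v.
  case: hiv => [[lam [lam' [l0 [l0' [ll [hp [hn hN2]]]]]]]|hb].
    have k0 : (0 < N L'.+1)%N by apply: leq_trans hN2.
    pose s : R := if lam' < lam then 1 else -1.
    have s1 : `|s| = 1 by rewrite /s; case: ifP => _; rewrite ?normrN normr1.
    have sl : s * lam' < s * lam.
      rewrite /s; case: ifP => h; rewrite ?mul1r ?mulN1r // ltrN2.
      by move/negbT: h; rewrite -leNgt le_eqVlt (negbTE ll).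
    exists (fun v => s * D rho v).
    exists (fun k => s * ((k == 1%N)%:R - (k == 0%N)%:R)); split.
      exact: (casea mon rc hr s1 sl l0 l0' hp hn).
    move=> v.
    under eq_bigr => k _ do rewrite -mulrA mulrBl.
    rewrite -mulr_sumr sumrB (sum_sel _ (_ : val (Ordinal hN2) = 1%N)) //.
    by rewrite (sum_sel _ (_ : val (Ordinal k0) = 0%N)) //= addr0.
  exists rho, (fun k => (k == 0%N)%:R); split.
    exact: (caseb mon strict hb).
  move=> v; rewrite (sum_sel _ (_ : val (Ordinal (Npos _ (leqnn _))) = 0%N)) //=.
  by rewrite addr0.
have [[a [b [ab [hb ha]]]] [M hM]] : (exists a b, a < b /\ (forall t, 0 < t -> b <= limn (fun n : nat => H (n%:R * t)))
          /\ (forall t, t < 0 -> limn (fun n : nat => H (n%:R * t)) <= a)) /\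
    (exists M, forall v, `|H v| <= M) by case: Hg.
have Hcv : forall t, cvgn (fun n : nat => H (n%:R * t)) by case: Hg.
pose c := p i ord0.
pose t x := ss rho i c x0 L' x - zz rho c x0 L'.
pose g n := realization rho (net L' rho i c x0 co n).
have gE : forall n x, g n x = H (n%:R * t x).
  by move=> n x; rewrite /g net_real // -Hco.
pose f x := limn (fun n : nat => H (n%:R * t x)).
have gf : forall x, g ^~ x @ \oo --> f x.
  move=> x; under eq_fun do rewrite gE; exact: Hcv.
have gc : forall n, continuous (g n) by move=> n; apply: real_cont.
have gM : forall n x, `|g n x| <= M by move=> n x; rewrite gE.
exists f; split.
- split; first exact: (f_meas gc gf).
  exists M; apply: aeW => x; exact: (lim_bound (gf x) (fun n => gM n x)).
- move=> q q0; exists (net L' rho i c x0 co).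
  exact: (@Lp_conv R (N 0%N) mu g f M q gc gf gM mufin q0).
- move=> [Phi hae]; apply: (not_ae_eq (@real_cont R N L'.+2 rho Phi rc) ab _ _ two hae).
    move=> x hx; apply: hb; have [h1 _] := ss_sign i c x strict L'.
    by rewrite /t subr_gt0; apply: h1.
  move=> x hx; apply: ha; have [_ h2] := ss_sign i c x strict L'.
  by rewrite /t subr_lt0; apply: h2.
Qed.
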